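(* Let $\lambda>0$, $\lambda_{max}>0$ and $p\in(0,1]$. For $q\in(0,1]$ let $r(q)=\min\{p/q,1\}$ (so $r(q)q=\min\{p,q\}$, and set $r(0)\cdot 0=0$), and for $q,\tilde q\in[0,1]$ let $$\mathrm{TH}(q,\tilde q)=r(q)\,q\,\exp\!\Big(-\frac{\lambda\, r(\tilde q)\,\tilde q}{\lambda_{max}}\Big).$$ Call $q^*\in[0,1]$ a symmetric Nash equilibrium (SNE) if $\mathrm{TH}(q^*,q^* )=\max_{q\in[0,1]}\mathrm{TH}(q,q^* )$. Then every $q^*$ with $p\le q^*\le 1$ is an SNE. Moreover, at any SNE $q^*$, $\mathrm{TH}(q^*,q^* )=p\exp\!\big(-\frac{p\lambda}{\lambda_{max}}\big)$, and the transmission capacity $C=\lambda\,\mathrm{TH}(q^*,q^* )$ equals $\lambda p\exp\!\big(-\frac{p\lambda}{\lambda_{max}}\big)$.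
   Context: Game-theoretic ALOHA model with infinite battery capacity: transmitters form a homogeneous Poisson point process of density $\lambda$ in $\mathbb{R}^2$; each harvests one energy unit per slot with probability $p$ and, when its battery is nonempty, transmits with its own probability. $\mathrm{TH}(q,\tilde q)$ is the throughput of a transmitter using transmission probability $q$ when all other transmitters use $\tilde q$; $r(q)$ is the stationary probability of a nonempty battery; $\lambda_{max}=\frac{1}{d^2\theta^{2/\alpha}\kappa(\alpha)}$ with $\kappa(\alpha)=\frac{2\pi^2}{\alpha\sin(2\pi/\alpha)}$. *)

(* Defs.v *)
From Stdlib Require Import Reals.
Open Scope R_scope.

(* r(q) = min{p/q, 1}, the stationary probability of a nonempty battery
   (meaningful for q in (0,1]). *)
Definition r_batt (p q : R) : R := Rmin (p / q) 1.

Definition rq (p q : R) : R :=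
  if Req_EM_T q 0 then 0 else r_batt p q * q.

Definition TH (lam lmax p q qt : R) : R :=
  rq p q * exp (- (lam * rq p qt / lmax)).

(* qs is a symmetric Nash equilibrium: qs in [0,1] and
   TH(qs,qs) = max_{q in [0,1]} TH(q,qs) (qs itself is in [0,1], so this
   says TH(qs,qs) is an upper bound of {TH(q,qs) | q in [0,1]}). *)
Definition SNE (lam lmax p qs : R) : Prop :=
  0 <= qs <= 1 /\
  forall q, 0 <= q <= 1 -> TH lam lmax p q qs <= TH lam lmax p qs qs.

Definition capacity (lam lmax p qs : R) : R := lam * TH lam lmax p qs qs.

(* Main.v *)
Require Import Defs.
From Stdlib Require Import Reals Lra.
Open Scope R_scope.

Lemma rq_min p q : 0 < p -> 0 <= q -> rq p q = Rmin p q.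
Proof.
  intros Hp Hq. unfold rq, r_batt.
  destruct (Req_EM_T q 0) as [->|Hn].
  - rewrite Rmin_right; lra.
  - assert (Hq' : 0 < q) by lra.
    destruct (Rle_dec p q) as [H|H].
    + rewrite (Rmin_left (p/q) 1).
      * rewrite Rmin_left by lra. field. lra.
      * apply Rmult_le_reg_r with q; [lra|]. unfold Rdiv.
        rewrite Rmult_assoc, Rinv_l by lra. lra.
    + rewrite (Rmin_right (p/q) 1).
      * rewrite Rmin_right by lra. lra.
      * apply Rmult_le_reg_r with q; [lra|]. unfold Rdiv.
        rewrite Rmult_assoc, Rinv_l by lra. lra.
Qed.

Theorem theorem3 (lam lmax p : R) :
  0 < lam -> 0 < lmax -> 0 < p <= 1 ->
  (forall qs, p <= qs <= 1 -> SNE lam lmax p qs) /\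
  (forall qs, SNE lam lmax p qs ->
     TH lam lmax p qs qs = p * exp (- (p * lam / lmax)) /\
     capacity lam lmax p qs = lam * p * exp (- (p * lam / lmax))).
Proof.
  intros Hl Hm Hp.
  assert (Hpq : forall qs, SNE lam lmax p qs -> rq p qs = p).
  { intros qs [Hqs H]. rewrite rq_min by lra.
    destruct (Rle_dec p qs) as [Hle|Hlt]; [apply Rmin_left; lra|].
    exfalso. specialize (H p ltac:(lra)). unfold TH in H.
    rewrite (rq_min p p), (rq_min p qs) in H by lra.
    rewrite Rmin_left, Rmin_right in H by lra.
    pose proof (exp_pos (- (lam * qs / lmax))). nra. }
  split.
  - intros qs Hqs. split; [lra|]. intros q Hq. unfold TH.
    rewrite (rq_min p q), (rq_min p qs) by lra.
    apply Rmult_le_compat_r; [apply Rlt_le, exp_pos|].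
    rewrite (Rmin_left p qs) by lra. apply Rmin_l.
  - intros qs H. pose proof (Hpq qs H) as E.
    assert (T : TH lam lmax p qs qs = p * exp (- (p * lam / lmax))).
    { unfold TH. rewrite E. do 2 f_equal. field. lra. }
    split; [exact T|]. unfold capacity. rewrite T. ring.
Qed.
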